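(* Let $(G,k)$ be an instance and let $v\in V$ satisfy $|N(v)|>7k$ and $\rho(v)\le \frac{|N(v)|(|N(v)|-1)}{4}$. Then for every feasible solution $X$ with $v\notin X$, the connected component of $G-X$ containing $v$ is a tree.
   Context: Graphs are undirected, without self-loops, possibly with multi-edges. $N(v)$ is the set of vertices adjacent to $v$; $\rho(v)$ is the number of unordered pairs $\{u_1,u_2\}\subseteq N(v)$ joined by at least one edge (parallel edges counted once). A vertex set induces a clique if between any two distinct vertices of it there is exactly one edge, and a tree if it is connected and has no cycle (two parallel edges form a cycle). For an integer $k\ge1$, a feasible solution is a set $X\subseteq V$ with $|X|\le k$ such that every connected component of $G-X$ is a clique or a tree. *)

(* Defs.v *)
(* A multigraph on a finite vertex type T is given by an
   edge-multiplicity function m : T -> T -> nat (number of parallel edges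
   between two vertices), assumed symmetric and loopless. *)
From mathcomp Require Import all_boot.
Set Implicit Arguments. Unset Strict Implicit. Unset Printing Implicit Defensive.

Section Multigraph.
Variables (T : finType) (m : T -> T -> nat).

Definition multigraph := (forall x y, m x y = m y x) /\ (forall x, m x x = 0).

Definition adj : rel T := fun x y => 0 < m x y.

Definition nbhd (v : T) : {set T} := [set u | adj v u].

Definition rho (v : T) : nat :=
  #|[set p : {set T} | [&& p \subset nbhd v, #|p| == 2 &
      [exists u1 in p, exists u2 in p, (u1 != u2) && adj u1 u2]]]|.

Definition adj_in (S : {set T}) : rel T :=
  fun x y => [&& x \in S, y \in S & adj x y].

Definition is_clique (S : {set T}) : Prop :=
  forall x y, x \in S -> y \in S -> x != y -> m x y = 1.

Definition connected_in (S : {set T}) : Prop :=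
  forall x y, x \in S -> y \in S -> connect (adj_in S) x y.

Definition has_cycle_in (S : {set T}) : Prop :=
  (exists x y, [/\ x \in S, y \in S, x != y & 2 <= m x y]) \/
  (exists s : seq T, [/\ 3 <= size s, uniq s, all (mem S) s & cycle adj s]).

Definition is_tree (S : {set T}) : Prop :=
  connected_in S /\ ~ has_cycle_in S.

Definition comp_del (X : {set T}) (w : T) : {set T} :=
  [set y | connect (adj_in (~: X)) w y].

Definition feasible (k : nat) (X : {set T}) : Prop :=
  #|X| <= k /\
  forall w, w \notin X -> is_clique (comp_del X w) \/ is_tree (comp_del X w).

End Multigraph.

(* Main.v *)
Require Import Defs.
From mathcomp Require Import all_boot.
From mathcomp Require Import zify.

Lemma arith (t k : nat) : 1 <= k -> 6 * k < t -> (t + k) * (t + k - 1) < 2 * ((t - 1) * t).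
Proof.
move=> k1 h.
have ht : t = (6*k+1) + (t - (6*k+1)) by lia.
set u := t - (6*k+1) in ht. rewrite ht.
have -> : 6 * k + 1 + u + k - 1 = 7*k + u by lia.
have -> : 6 * k + 1 + u - 1 = 6*k + u by lia.
nia.
Qed.

Theorem mainTheorem3 (T : finType) (m : T -> T -> nat) (k : nat) (v : T) :
  multigraph m -> 1 <= k ->
  7 * k < #|nbhd m v| ->
  4 * rho m v <= #|nbhd m v| * (#|nbhd m v| - 1) ->
  forall X : {set T}, feasible m k X -> v \notin X ->
  is_tree m (comp_del m X v).
Proof.
move=> [msym mloop] k1 hn hrho X [hX hf] vX.
case: (hf v vX) => [hcl|//]; exfalso.
set S := nbhd m v :\: X.
have inC : forall x, x \in S -> x \in comp_del m X v.
  move=> x; rewrite !inE => /andP [xX vx].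
  apply: connect1.
  by rewrite /adj_in !inE vX xX vx.
have hsub : [set A : {set T} | A \subset S & #|A| == 2] \subset
  [set p : {set T} | [&& p \subset nbhd m v, #|p| == 2 &
      [exists u1 in p, exists u2 in p, (u1 != u2) && adj m u1 u2]]].
  apply/subsetP => p; rewrite !inE => /andP [pS p2].
  have pN : p \subset nbhd m v by apply: subset_trans pS (subsetDl _ _).
  rewrite pN p2 /=.
  case/cards2P: p2 pS pN => x [y [xy ->]] pS _.
  apply/existsP; exists x; rewrite !inE eqxx /=.
  apply/existsP; exists y; rewrite !inE eqxx orbT /= xy /=.
  have xS : x \in S by apply: (subsetP pS); rewrite !inE eqxx.
  have yS : y \in S by apply: (subsetP pS); rewrite !inE eqxx orbT.
  by rewrite /adj (hcl x y (inC _ xS) (inC _ yS) xy).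
have h1 := subset_leq_card hsub.
rewrite cards_draws in h1.
have hS : #|nbhd m v| <= #|S| + k.
  have := cardsID X (nbhd m v).
  have : #|nbhd m v :&: X| <= #|X| by apply: subset_leq_card; apply: subsetIr.
  rewrite /S; lia.
have hb := mul_bin_left #|S| 1.
rewrite bin1 in hb.
rewrite /rho in hrho.
move: h1 hb hrho hS hn k1.
set s := #|S|; set n := #|nbhd m v|; set r := #|_ : {set {set T}}|.
move=> h1 hb hrho hS hn k1.
have h2 : 2 * ((s - 1) * s) <= n * (n - 1).
  have : 2 * 'C(s, 2) = (s - 1) * s by [].
  lia.
have hts : n - k <= s by lia.
have hm : (n - k - 1) * (n - k) <= (s - 1) * s.
  by apply: leq_mul => //; apply: leq_sub2r.
have ha := @arith (n - k) k k1.
have : 6 * k < n - k by lia.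
move/ha => {}ha.
have e : n - k + k = n by lia.
rewrite e in ha.
lia.
Qed.
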